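(* Assume the standing setting and the type II decomposition for a type II edge $e=uw$. Then $U_1\neq\emptyset$, $W_2\neq\emptyset$, $|U_1|\ge|W_1|$ and $|W_2|\ge|U_2|$.
   Context: Graphs may have multiple edges but no loops. An edge is admissible if it lies in some perfect matching; a connected graph with at least two vertices is matching covered if every edge is admissible; an edge $e$ of a matching covered graph $G$ is removable if $G-e$ is matching covered, and nonremovable otherwise. A brick is a 3-connected nonbipartite graph $G$ such that $G-x-y$ has a perfect matching for all distinct $x,y$. A nonbipartite matching covered graph $G$ is near-bipartite if it has a pair of edges $\{e_1,e_2\}$ (a removable doubleton) such that $G-\{e_1,e_2\}$ is bipartite matching covered. For a graph with a perfect matching, a nonempty vertex set $S$ is a barrier if the number of odd components of $G-S$ equals $|S|$. Standing setting: $G$ is a near-bipartite brick with removable doubleton $\{e_1,e_2\}$, $H=G-\{e_1,e_2\}$, and $(U,W)$ is the bipartition of $H$, labelled so that both ends of $e_1$ lie in $U$ and both ends of $e_2$ lie in $W$. A nonremovable edge $e\notin\{e_1,e_2\}$ of $G$ is of type II if $e$ is nonremovable in $H$. Type II decomposition: let $e=uw$ be of type II with $u\in U$, $w\in W$. There is an edge $e^*$ of $G-e$ that is nonadmissible both in $G-e$ and in $H-e$; fix such $e^*$ and an inclusion-maximal barrier $B$ of $G-e$ containing both ends of $e^*$. Let $U_1=B\cap U$, $W_2=B\cap W$, and let $U_2$ (resp. $W_1$) be the set of vertices of $U$ (resp. $W$) that form single-vertex components of $G-e-B$. *)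

(* Defs.v *)
From mathcomp Require Import all_boot.
Set Implicit Arguments. Unset Strict Implicit. Unset Printing Implicit Defensive.

(* Loopless multigraphs: a finite vertex type V, a finite edge type E and an
   endpoint map g : E -> V * V (looplessness is a hypothesis of the theorem).
   A (sub)graph is described by a vertex set X and an edge set F; only the
   edges of F with both ends in X count as edges of the graph (X, F). *)
Section Graphs.
Variables (V E : finType) (g : E -> V * V).

Definition inc (x : V) (f : E) : bool := ((g f).1 == x) || ((g f).2 == x).

Definition edges (X : {set V}) (F : {set E}) : {set E} :=
  [set f in F | ((g f).1 \in X) && ((g f).2 \in X)].

Definition adj (X : {set V}) (F : {set E}) : rel V :=
  fun x y => [exists f in edges X F,
    (((g f).1 == x) && ((g f).2 == y)) || (((g f).1 == y) && ((g f).2 == x))].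

Definition connected (X : {set V}) (F : {set E}) : bool :=
  (X != set0) && [forall x in X, forall y in X, connect (adj X F) x y].

Definition perfect_matching (X : {set V}) (F : {set E}) (M : {set E}) : bool :=
  (M \subset edges X F) && [forall x in X, #|[set f in M | inc x f]| == 1].

Definition has_pm (X : {set V}) (F : {set E}) : Prop :=
  exists M, perfect_matching X F M.

Definition admissible (X : {set V}) (F : {set E}) (f : E) : Prop :=
  exists M, perfect_matching X F M /\ f \in M.

Definition matching_covered (X : {set V}) (F : {set E}) : Prop :=
  [/\ connected X F, 1 < #|X| &
      forall f, f \in edges X F -> admissible X F f].

Definition removable (X : {set V}) (F : {set E}) (f : E) : Prop :=
  matching_covered X (F :\ f).

Definition bipartition (X : {set V}) (F : {set E}) (U W : {set V}) : bool :=
  [&& U :&: W == set0, U :|: W == X &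
      [forall f in edges X F,
        (((g f).1 \in U) && ((g f).2 \in W)) ||
        (((g f).1 \in W) && ((g f).2 \in U))]].

Definition bipartite (X : {set V}) (F : {set E}) : Prop :=
  exists U W, bipartition X F U W.

Definition three_connected (X : {set V}) (F : {set E}) : Prop :=
  3 < #|X| /\ forall S : {set V}, S \subset X -> #|S| <= 2 ->
    connected (X :\: S) F.

Definition bicritical (X : {set V}) (F : {set E}) : Prop :=
  forall x y, x \in X -> y \in X -> x != y -> has_pm (X :\: [set x; y]) F.

Definition brick (X : {set V}) (F : {set E}) : Prop :=
  [/\ three_connected X F, ~ bipartite X F & bicritical X F].

Definition near_bipartite (X : {set V}) (F : {set E}) (e1 e2 : E) : Prop :=
  [/\ matching_covered X F, ~ bipartite X F,
      [/\ e1 \in edges X F, e2 \in edges X F & e1 != e2],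
      matching_covered X (F :\ e1 :\ e2) & bipartite X (F :\ e1 :\ e2)].

Definition components (X : {set V}) (F : {set E}) : {set {set V}} :=
  [set [set y in X | connect (adj X F) x y] | x in X].

Definition odd_components (X : {set V}) (F : {set E}) : nat :=
  #|[set C in components X F | odd #|C|]|.

Definition barrier (X : {set V}) (F : {set E}) (S : {set V}) : Prop :=
  [/\ has_pm X F, S != set0, S \subset X & odd_components (X :\: S) F = #|S|].

End Graphs.

(* Main.v *)
Require Import Defs.
From mathcomp Require Import all_boot zify.
Set Implicit Arguments. Unset Strict Implicit. Unset Printing Implicit Defensive.

Section Aux.
Variables (V E : finType) (g : E -> V * V).
Hypothesis noloop : forall f : E, (g f).1 != (g f).2.

Lemma comp_notB (B : {set V}) (F : {set E}) v :
  [set v] \in components g (~: B) F -> v \notin B.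
Proof.
move=> /imsetP [x xB Hv].
have : v \in [set y in ~: B | connect (adj g (~: B) F) x y] by rewrite -Hv set11.
by rewrite !inE => /andP [].
Qed.

Lemma comp_single (B : {set V}) (F : {set E}) v f :
  [set v] \in components g (~: B) F -> f \in F ->
  (g f).1 \notin B -> (g f).2 \notin B -> inc g v f -> False.
Proof.
move=> /imsetP [x xB Hv] fF h1 h2 hinc.
have : v \in [set y in ~: B | connect (adj g (~: B) F) x y] by rewrite -Hv set11.
rewrite inE => /andP [_ cxv].
have adj12 : adj g (~:B) F (g f).1 (g f).2.
  by apply/existsP; exists f; rewrite /edges !inE fF h1 h2 /= !eqxx.
have adj21 : adj g (~:B) F (g f).2 (g f).1.
  by apply/existsP; exists f; rewrite /edges !inE fF h1 h2 /= !eqxx orbT.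
have mem y : y \notin B -> connect (adj g (~:B) F) x y -> y = v.
  move=> yB cy; have : y \in [set v] by rewrite Hv !inE yB cy.
  by rewrite inE => /eqP.
move: hinc; rewrite /inc => /orP [] /eqP Hv1; rewrite -Hv1 in cxv.
- have := mem _ h2 (connect_trans cxv (connect1 adj12)).
  by rewrite -Hv1 => E1; move: (noloop f); rewrite E1 eqxx.
- have := mem _ h1 (connect_trans cxv (connect1 adj21)).
  by rewrite -Hv1 => E1; move: (noloop f); rewrite E1 eqxx.
Qed.

Definition oth (f : E) (x : V) := if (g f).1 == x then (g f).2 else (g f).1.

Lemma pick_spec (N : {set E}) v :
  #|[set f in N | inc g v f]| == 1 ->
  exists f, [/\ [pick f in N | inc g v f] = Some f, f \in N, inc g v f &
    forall f', f' \in N -> inc g v f' -> f' = f].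
Proof.
move=> /cards1P [f0 Hf0].
have uniq f' : f' \in N -> inc g v f' -> f' = f0.
  move=> h1 h2; have : f' \in [set f in N | inc g v f] by rewrite inE h1 h2.
  by rewrite Hf0 inE => /eqP.
case: pickP => [f /andP [fN fv]|H].
  exists f; split => //; move=> f' h1 h2; by rewrite (uniq _ h1 h2) (uniq _ fN fv).
have : f0 \in [set f in N | inc g v f] by rewrite Hf0 set11.
by rewrite inE H.
Qed.

Lemma match_bound (N : {set E}) (X Y B : {set V}) (F : {set E}) :
  (forall v, #|[set f in N | inc g v f]| == 1) ->
  N \subset F ->
  X :&: Y = set0 ->
  (forall f, f \in N -> ((g f).1 \in X) && ((g f).2 \in Y) || ((g f).1 \in Y) && ((g f).2 \in X)) ->
  #|[set v in X | [set v] \in components g (~: B) F]| <= #|B :&: Y|.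
Proof.
move=> hN NF XY side.
pose phi v := if [pick f in N | inc g v f] is Some f then oth f v else v.
set A := [set v in X | _].
have inYoth v f : v \in X -> f \in N -> inc g v f -> oth f v \in Y.
  move=> vX fN; rewrite /inc /oth; move: (side f fN).
  have dis a : a \in X -> a \in Y -> False.
    move=> h1 h2; have : a \in X :&: Y by rewrite inE h1 h2.
    by rewrite XY inE.
  case: eqP => [E1|ne1].
    rewrite -E1 in vX.
    by case/orP => /andP [] // h1 h2; case: (dis _ vX h1).
  rewrite /= => + /eqP E2; rewrite -E2 in vX.
  by case/orP => /andP [] // h1 h2; case: (dis _ vX h2).
have incoth f v : inc g v f -> inc g (oth f v) f.
  by rewrite /inc /oth; case: eqP => _; rewrite eqxx ?orbT.
have phiB v : v \in A -> exists f, [/\ phi v = oth f v, f \in N, inc g v f & oth f v \in B :&: Y].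
  rewrite inE => /andP [vX vC].
  have [f [pf fN fv uf]] := pick_spec (hN v).
  exists f; rewrite /phi pf; split => //.
  rewrite inE (inYoth _ _ vX fN fv) andbT.
  apply/negPn/negP => oB.
  have vB := comp_notB vC.
  apply: (comp_single vC (subsetP NF _ fN) _ _ fv);
    move: fv oB vB; rewrite /inc /oth; case: eqP => [E1|_] /=; try rewrite E1 //; move/eqP => E2; rewrite ?E2 //. 
have inj : {in A &, injective phi}.
  move=> v1 v2 h1 h2 Heq.
  have [f1 [p1 f1N f1v _]] := phiB _ h1.
  have [f2 [p2 f2N f2v _]] := phiB _ h2.
  have [fb [_ _ _ ub]] := pick_spec (hN (phi v1)).
  have e1 : f1 = fb by apply: ub => //; rewrite p1 incoth.
  have e2 : f2 = fb by apply: ub => //; rewrite Heq p2 incoth.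
  subst f1 f2; move: p1 p2 Heq f1v f2v; rewrite /oth /inc => -> ->.
  move: (noloop fb); set a := (g fb).1; set c := (g fb).2.
  have [E1|n1] := eqVneq a v1; have [E2|n2] := eqVneq a v2 => //=.
  1-4: move=> nl H k1 k2.
  - by rewrite -E1 -E2.
  - by rewrite H eqxx in nl.
  - by rewrite H eqxx in nl.
  - by move: k1 k2 => /eqP <- /eqP <-.
rewrite -(card_in_imset inj); apply: subset_leq_card.
apply/subsetP => y /imsetP [v vA ->].
by have [f [-> _ _ H]] := phiB _ vA.
Qed.

End Aux.
Section T.
Variables (V E : finType) (g : E -> V * V).
Hypothesis noloop : forall f : E, (g f).1 != (g f).2.

Lemma edge_avoid x y1 y2 : three_connected g setT setT ->
  exists f, ((g f).1 == x) && ((g f).2 \notin [set y1; y2]) ||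
            ((g f).2 == x) && ((g f).1 \notin [set y1; y2]).
Proof.
move=> [c3 hc].
set S := [set y1; y2] :\ x.
have cS : #|S| <= 2.
  apply: leq_trans (subset_leq_card (subsetDl _ _)) _.
  by rewrite cards2; case: (y1 != y2).
have [y yS] : exists y, y \notin x |: S.
  apply/existsP; rewrite -negb_forall; apply/negP => /forallP H.
  have : #|[set: V]| <= #|x |: S|.
    by apply: subset_leq_card; apply/subsetP => z _; exact: H.
  rewrite cardsU1 => h.
  have := leq_trans c3 h; case: (x \notin S) => /=; lia.
have := hc S (subsetT _) cS.
case/andP => _ /forallP /(_ x) /implyP.
have xin : x \in [set: V] :\: S by rewrite !inE eqxx.

move/(_ xin) => /forallP /(_ y) /implyP.
have yin : y \in [set: V] :\: S by move: yS; rewrite !inE negb_or => /andP [_ ->].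
move/(_ yin) => /connectP [[|z p] /=].
  by move=> _ Ey; move: yS; rewrite -Ey setU11.
case/andP => /existsP [f /andP [fe fxz]] _ _.
move: fe; rewrite /edges !inE => /andP [_ /andP [h1 h2]].
exists f.
case/orP: fxz => /andP [/eqP E1 /eqP E2].
- apply/orP; left; rewrite E1 eqxx /=.
  apply/negP => hy; move: h2 hy; rewrite !inE andbT -E1 eq_sym (noloop f) /=.
  by move=> /negPf ->.
- apply/orP; right; rewrite E2 eqxx /=.
  apply/negP => hy; move: h1 hy; rewrite !inE andbT -E2 (noloop f) /=.
  by move=> /negPf ->.
Qed.
End T.

Theorem mainTheorem9 (V E : finType) (g : E -> V * V)
  (noloop : forall f : E, (g f).1 != (g f).2)
  (e1 e2 : E) (U W : {set V}) (e estar : E) (B : {set V}) :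
  (* standing setting: G = (V, E) near-bipartite brick, H = G - {e1, e2} *)
  brick g setT setT ->
  near_bipartite g setT setT e1 e2 ->
  bipartition g setT (setT :\ e1 :\ e2) U W ->
  (g e1).1 \in U -> (g e1).2 \in U ->
  (g e2).1 \in W -> (g e2).2 \in W ->
  (* e is of type II *)
  e \notin [set e1; e2] ->
  ~ removable g setT setT e ->
  ~ removable g setT (setT :\ e1 :\ e2) e ->
  (* e* : an edge of G - e (and of H - e) nonadmissible in G - e and in H - e *)
  estar != e -> estar \notin [set e1; e2] ->
  ~ admissible g setT (setT :\ e) estar ->
  ~ admissible g setT (setT :\ e1 :\ e2 :\ e) estar ->
  (* B : inclusion-maximal barrier of G - e containing both ends of e* *)
  barrier g setT (setT :\ e) B ->
  (g estar).1 \in B -> (g estar).2 \in B ->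
  (forall B' : {set V}, barrier g setT (setT :\ e) B' ->
     (g estar).1 \in B' -> (g estar).2 \in B' -> B \subset B' -> B' = B) ->
  let U1 := B :&: U in
  let W2 := B :&: W in
  let U2 := [set v in U | [set v] \in components g (~: B) (setT :\ e)] in
  let W1 := [set v in W | [set v] \in components g (~: B) (setT :\ e)] in
  [/\ U1 != set0, W2 != set0, #|W1| <= #|U1| & #|U2| <= #|W2|].
Proof.
move=> [c3 _ _] [_ _ _ hmcH _] /and3P [/eqP UW /eqP UuW /forallP hside]
  e1U1 e1U2 e2W1 e2W2 eH _ _ _ esH _ _ _ eB1 eB2 _ U1 W2 U2 W1.
have inH f : f \notin [set e1; e2] -> f \in edges g setT (setT :\ e1 :\ e2).
  by rewrite /edges !inE negb_or => /andP [h1 h2]; rewrite h1 h2.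
have sideH f : f \in edges g setT (setT :\ e1 :\ e2) ->
   ((g f).1 \in U) && ((g f).2 \in W) || ((g f).1 \in W) && ((g f).2 \in U).
  by move=> h; move: (hside f); rewrite h.
have dis a : a \in U -> a \in W -> False.
  move=> h1 h2; have : a \in U :&: W by rewrite inE h1 h2.
  by rewrite UW inE.
have [U1n W2n] : U1 != set0 /\ W2 != set0.
  move: (sideH _ (inH _ esH)) => /orP [] /andP [h1 h2].
  - by split; apply/set0Pn; [exists (g estar).1 | exists (g estar).2]; rewrite inE ?eB1 ?eB2.
  - by split; apply/set0Pn; [exists (g estar).2 | exists (g estar).1]; rewrite inE ?eB1 ?eB2.
set x := (g e).1.
set y2 := if inc g x e1 then oth g e1 x else oth g e2 x.
have [f hf] := edge_avoid noloop x (g e).2 y2 c3.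
have [fx fo] : inc g x f /\ oth g f x \notin [set (g e).2; y2].
  rewrite /inc /oth; case/orP: hf => /andP [/eqP Ex h].
    by rewrite Ex eqxx.
  have n1 : (g f).1 != x by rewrite -Ex noloop.
  by rewrite (negPf n1) Ex eqxx.
have fe : f != e.
  apply/eqP => Ef; move: fo; rewrite Ef /oth /x eqxx !inE eqxx //.
have fH : f \notin [set e1; e2].
  rewrite !inE negb_or; apply/andP; split; apply/eqP => Ef; move: fo; rewrite Ef.
  - by rewrite /y2 -Ef fx !inE eqxx orbT.
  - rewrite /y2; case: ifP => h1.
      exfalso; apply: (dis x).
        by move: h1; rewrite /inc => /orP [] /eqP <-.
      by move: fx; rewrite Ef /inc => /orP [] /eqP <-.
    by rewrite -Ef !inE eqxx orbT.
case: hmcH => _ _ /(_ f (inH _ fH)) [N [/andP [NH /forallP one1] fN]].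
have one v : #|[set f in N | inc g v f]| == 1 by move: (one1 v); rewrite inE.
have eN : e \notin N.
  apply/negP => eN.
  have /cards1P [f0 Hf0] := one x.
  have : e \in [set f in N | inc g x f] by rewrite inE eN /inc /x eqxx.
  have : f \in [set f in N | inc g x f] by rewrite inE fN fx.
  rewrite Hf0 !inE => /eqP Ef /eqP E0.
  by rewrite Ef E0 eqxx in fe.
have NF : N \subset [set: E] :\ e.
  apply/subsetP => h hN; rewrite !inE andbT.
  by apply/negP => /eqP Eh; rewrite -Eh hN in eN.
have sideN h : h \in N -> ((g h).1 \in U) && ((g h).2 \in W) || ((g h).1 \in W) && ((g h).2 \in U).
  by move=> hN; apply: sideH; apply: (subsetP NH).
split => //.
- rewrite /W1 /U1; apply: (@match_bound _ _ g noloop N W U B _ one NF); first by rewrite setIC.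
  by move=> h /sideN; rewrite orbC.
- rewrite /U2 /W2; exact: (@match_bound _ _ g noloop N U W B _ one NF UW sideN).
Qed.
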